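(* Let $n>3$ be an integer and $[n]=\{0,1,\dots,n-1\}$. Let $B_0,B_1,\dots,B_m$ ($m\ge 1$) be a sequence of $3$-element subsets of $[n]$ such that $|B_t\setminus B_{t+1}|=1$ for every $0\le t<m$. For $0\le t<m$ let $e_t$ denote the unique element of $B_t\setminus B_{t+1}$ (the partition evicted after state $t$), and for $1\le t\le m$ let $\ell_t$ denote the unique element of $B_t\setminus B_{t-1}$ (the partition just loaded into state $t$). Suppose that: (1) for every $1\le t<m$, $\ell_t\neq e_t$; and (2) for every pair $a\neq b$ in $[n]$, the set $\{t\in\{0,\dots,m\} : \{a,b\}\subseteq B_t\}$ is a set of consecutive integers (possibly empty). Then the sequence is a Prefetching Supported Order: for every $0\le t<m$ there exists an edge bucket $(a,b)\in[n]^2$ that is pending at state $t$ and satisfies $e_t\notin\{a,b\}$.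
   Context: Node embeddings are split into $n$ partitions indexed by $[n]$; an edge bucket is an ordered pair $(a,b)\in[n]^2$. The GPU buffer holds exactly $3$ partitions at a time; the buffer states are the sets $B_0,\dots,B_m$, and consecutive states differ by swapping out exactly one partition and swapping in exactly one other. An edge bucket $(a,b)$ is processed at the first buffer state containing both $a$ and $b$; accordingly, $(a,b)$ is called pending at state $t$ if $\{a,b\}\subseteq B_t$ and there is no $s<t$ with $\{a,b\}\subseteq B_s$. A sequence of buffer states is a Prefetching Supported Order if for every $0\le t<m$ there is at least one edge bucket pending at state $t$ that does not involve the partition $e_t$ scheduled for eviction (so that this bucket can be computed while $e_t$ is swapped out and the next partition is loaded). *)

(* Defs.v *)
From mathcomp Require Import all_boot.
Set Implicit Arguments. Unset Strict Implicit. Unset Printing Implicit Defensive.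

Definition evicted n (B : nat -> {set 'I_n}) (t : nat) : option 'I_n :=
  [pick x in B t :\: B t.+1].

Definition loaded n (B : nat -> {set 'I_n}) (t : nat) : option 'I_n :=
  [pick x in B t :\: B t.-1].

Definition pending n (B : nat -> {set 'I_n}) (t : nat) (a b : 'I_n) : Prop :=
  (a \in B t) /\ (b \in B t) /\
  (forall s, s < t -> ~ ((a \in B s) /\ (b \in B s))).

Definition consecutive_cover n (B : nat -> {set 'I_n}) (m : nat) (a b : 'I_n) : Prop :=
  forall s u v, s <= u <= v -> v <= m ->
    a \in B s -> b \in B s -> a \in B v -> b \in B v ->
    (a \in B u) && (b \in B u).

Definition prefetching_supported n (B : nat -> {set 'I_n}) (m : nat) : Prop :=
  forall t, t < m -> exists a b : 'I_n,
    pending B t a b /\ evicted B t != Some a /\ evicted B t != Some b.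

(* Main.v *)
Require Import Defs.
From mathcomp Require Import all_boot.

Lemma third_elt (n : nat) (A : {set 'I_n}) (a b : 'I_n) :
  #|A| = 3 -> exists2 y, y \in A & (y != a) && (y != b).
Proof.
move=> hA; case: (boolP [exists y in A, (y != a) && (y != b)]) => [/exists_inP //|/exists_inPn H].
have sub : A \subset [set a; b].
  apply/subsetP => y yA; move: (H y yA); rewrite !inE negb_and !negbK.
  by case/orP => ->; rewrite ?orbT.
move: (subset_leq_card sub); rewrite cards2 hA; by case: (a != b).
Qed.

Lemma pick1 (n : nat) (A : {set 'I_n}) : #|A| = 1 ->
  exists x, A = [set x] /\ [pick y in A] = Some x.
Proof.
move=> /eqP /cards1P [x ->]; exists x; split => //.
case: pickP => [y|]; first by rewrite inE => /eqP ->.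
by move/(_ x); rewrite !inE eqxx.
Qed.

Theorem theorem1 (n : nat) (B : nat -> {set 'I_n}) (m : nat) :
  3 < n -> 1 <= m ->
  (forall t, t <= m -> #|B t| = 3) ->
  (forall t, t < m -> #|B t :\: B t.+1| = 1) ->
  (forall t, 1 <= t -> t < m -> loaded B t != evicted B t) ->
  (forall a b : 'I_n, a != b -> consecutive_cover B m a b) ->
  prefetching_supported B m.
Proof.
move=> _ _ Hc Hd Hl Hcc t tm.
have [e [De Pe]] := @pick1 _ _ (Hd t tm).
have eE : evicted B t = Some e by [].
have eB : e \in B t by have := set11 e; rewrite -De inE => /andP[].
case: t tm De Pe eE eB => [|t] tm De Pe eE eB.
  have [x xB /andP [xe _]] := @third_elt _ _ e e (Hc 0 (ltnW tm)).
  have [y yB /andP [ye yx]] := @third_elt _ _ e x (Hc 0 (ltnW tm)).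
  exists x, y; split; first by split; [|split].
  by rewrite eE; split; apply/eqP => [[]] /eqP; rewrite eq_sym ?(negbTE xe) ?(negbTE ye).
have card1 : #|B t.+1 :\: B t| = 1.
  have := Hd t (ltnW tm); rewrite !cardsD Hc ?(ltnW (ltnW tm)) // Hc ?(ltnW tm) //.
  by rewrite setIC.
have [l [Dl Pl]] := @pick1 _ _ card1.
have lE : loaded B t.+1 = Some l by [].
have le : l != e.
  by apply/negP => /eqP lev; move: (Hl t.+1 isT tm); rewrite lE eE lev eqxx.
have lB : (l \in B t.+1) && (l \notin B t).
  by have := set11 l; rewrite -Dl inE andbC.
case/andP: lB => lB lnB.
have [y yB /andP [ye yl]] := @third_elt _ _ e l (Hc t.+1 (ltnW tm)).
exists l, y; split.
  split => //; split => // s st [ls ys].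
  have := Hcc l y (ltac:(by rewrite eq_sym)) s t t.+1.
  rewrite -ltnS st leqnSn ltnW //= => /(_ isT isT ls ys lB yB) /andP[lt _].
  by rewrite lt in lnB.
by rewrite eE; split; apply/eqP => [[]] /eqP; rewrite eq_sym ?(negbTE le) ?(negbTE ye).
Qed.
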